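(* Let $\mathcal H$ be a Hilbert space, and let $a,b$ be operators on $\mathcal H$ together with a dense subspace $\mathcal D$ of $\mathcal H$ such that $a^\sharp\mathcal D\subseteq\mathcal D$ and $b^\sharp\mathcal D\subseteq\mathcal D$ (where $x^\sharp$ denotes $x$ or $x^\dagger$), and $abf-baf=f$ for all $f\in\mathcal D$. Assume there is a nonzero $\varphi_0\in\mathcal D$ with $a\varphi_0=0$, and set $\varphi_n=\frac{1}{\sqrt{n!}}b^n\varphi_0$, $n\ge 0$, and $\mathcal L_\varphi=\operatorname{span}\{\varphi_n:n\ge0\}$ (finite linear combinations). For $\gamma\in\mathbb C$ let $\sigma_1=e^{\gamma a}$ and $\sigma_2=e^{\gamma b}$ be defined as the series $\sigma_1 f=\sum_{k\ge0}\frac{(\gamma a)^k}{k!}f$ and $\sigma_2 f=\sum_{k\ge0}\frac{(\gamma b)^k}{k!}f$, with domain the set of vectors $f$ for which the series converges in $\mathcal H$. Then $D(\sigma_1)\supseteq\mathcal L_\varphi$. Moreover, if there exist $r_\varphi>0$ and $\alpha_\varphi\in[0,\tfrac12)$ with $\|\varphi_n\|\le r_\varphi^n(n!)^{\alpha_\varphi}$ for all $n\ge0$, then $D(\sigma_2)\supseteq\mathcal L_\varphi$.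
   Context: Standard facts in this setting: $a\varphi_0=0$, $a\varphi_n=\sqrt n\,\varphi_{n-1}$ for $n\ge1$, $b\varphi_n=\sqrt{n+1}\,\varphi_{n+1}$, and all $\varphi_n\in\mathcal D$. *)

(* Defs.v *)
From HB Require Import structures.
From mathcomp Require Import all_boot all_order all_algebra.
From mathcomp Require Import all_classical all_reals all_analysis.
From mathcomp Require Import complex Rstruct Rstruct_topology.
Set Implicit Arguments. Unset Strict Implicit. Unset Printing Implicit Defensive.
Import Order.TTheory GRing.Theory Num.Theory.
Import numFieldNormedType.Exports.
Local Open Scope classical_set_scope.
Local Open Scope ring_scope.

Notation RR := Rdefinitions.R.
Notation CC := (complex Rdefinitions.R).

Section Hilbert.
Variable H : completeNormedModType CC.

(* ip is an inner product on H (linear in the 2nd argument, conjugate-linear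
   in the first, physics convention) inducing the norm of H.  Together with
   completeness of H this makes H a (complex) Hilbert space. *)
Definition is_inner_product (ip : H -> H -> CC) : Prop :=
  [/\ (forall (x y z : H) (c : CC), ip x (c *: y + z) = c * ip x y + ip x z),
      (forall x y : H, ip y x = conjc (ip x y)) &
      (forall x : H, ip x x = `|x| ^+ 2)].

Definition lin_subspace (S : set H) : Prop :=
  S 0 /\ forall (c : CC) (x y : H), S x -> S y -> S (c *: x + y).

(* a (possibly unbounded) linear operator: a linear map a defined on the
   subspace S = D(a) (the values of the function a outside S are irrelevant) *)
Definition lin_op (S : set H) (a : H -> H) : Prop :=
  lin_subspace S /\
  forall (c : CC) (x y : H), S x -> S y -> a (c *: x + y) = c *: a x + a y.

Definition is_adjoint (ip : H -> H -> CC) (S : set H) (a : H -> H)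
    (Sad : set H) (ad : H -> H) : Prop :=
  (forall g : H, Sad g <-> exists h : H, forall f, S f -> ip g (a f) = ip h f) /\
  (forall g f : H, Sad g -> S f -> ip g (a f) = ip (ad g) f).

Definition phi_vec (b : H -> H) (phi0 : H) (n : nat) : H :=
  (sqrtC (n`!%:R : CC))^-1 *: iter n b phi0.

Definition span_phi (b : H -> H) (phi0 : H) : set H :=
  [set f | exists (N : nat) (c : nat -> CC),
             f = \sum_(n < N) c n *: phi_vec b phi0 n].

Definition exp_dom (S : set H) (x : H -> H) (gamma : CC) : set H :=
  [set f | (forall k : nat, S (iter k (fun v => gamma *: x v) f)) /\
           cvgn (series (fun k : nat =>
                   (k`!%:R : CC)^-1 *: iter k (fun v => gamma *: x v) f))].

End Hilbert.

(* Main.v *)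
Require Import Defs.
From HB Require Import structures.
From mathcomp Require Import all_boot all_order all_algebra.
From mathcomp Require Import all_classical all_reals all_analysis.
From mathcomp Require Import complex Rstruct Rstruct_topology.
From mathcomp Require Import ring lra zify.
Import Order.TTheory GRing.Theory Num.Theory.
Import numFieldNormedType.Exports.
Local Open Scope classical_set_scope.
Local Open Scope ring_scope.
Local Open Scope complex_scope.
Set Implicit Arguments. Unset Strict Implicit.

Definition linD (H : completeNormedModType CC) (D : set H) (L : H -> H) :=
  (forall x, D x -> D (L x)) /\
  (forall (c : CC) x y, D x -> D y -> L (c *: x + y) = c *: L x + L y).

Lemma sub0 (H : completeNormedModType CC) (D : set H) : lin_subspace D -> D 0.
Proof. by case. Qed.

Lemma subZ (H : completeNormedModType CC) (D : set H) c x :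
  lin_subspace D -> D x -> D (c *: x).
Proof. by move=> [D0 DL] Dx; rewrite -[_ *: _]addr0; apply: DL. Qed.

Lemma subD (H : completeNormedModType CC) (D : set H) x y :
  lin_subspace D -> D x -> D y -> D (x + y).
Proof. by move=> [D0 DL] Dx Dy; rewrite -[x]scale1r; apply: DL. Qed.

Lemma subsum (H : completeNormedModType CC) (D : set H) N (c : nat -> CC) (x : nat -> H) :
  lin_subspace D -> (forall i, D (x i)) -> D (\sum_(i < N) c i *: x i).
Proof.
move=> DS Dx; elim: N => [|N IH]; first by rewrite big_ord0; exact: sub0.
by rewrite big_ord_recr /=; apply: subD => //; apply: subZ.
Qed.

Lemma L0 (H : completeNormedModType CC) (D : set H) L :
  lin_subspace D -> linD D L -> L 0 = 0.
Proof.
move=> DS [_ LL]; have D0 := sub0 DS.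
have := LL 1 0 0 D0 D0; rewrite !scale1r addr0 => h.
by apply: (addrI (L 0)); rewrite addr0 -h.
Qed.

Lemma LZ (H : completeNormedModType CC) (D : set H) L c x :
  lin_subspace D -> linD D L -> D x -> L (c *: x) = c *: L x.
Proof.
move=> DS LD Dx; have := (LD.2 c x 0 Dx (sub0 DS)).
by rewrite !addr0 (L0 DS LD) addr0.
Qed.

Lemma LDD (H : completeNormedModType CC) (D : set H) L x y :
  lin_subspace D -> linD D L -> D x -> D y -> L (x + y) = L x + L y.
Proof.
by move=> DS LD Dx Dy; have := LD.2 1 x y Dx Dy; rewrite !scale1r.
Qed.

Lemma Lsum (H : completeNormedModType CC) (D : set H) L N (c : nat -> CC) (x : nat -> H) :
  lin_subspace D -> linD D L -> (forall i, D (x i)) ->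
  L (\sum_(i < N) c i *: x i) = \sum_(i < N) c i *: L (x i).
Proof.
move=> DS LD Dx; elim: N => [|N IH]; first by rewrite !big_ord0 (L0 DS LD).
rewrite !big_ord_recr /= (LDD DS LD); [|exact: (@subsum _ _ N c x DS Dx)|exact: subZ].
by rewrite IH (LZ _ DS LD).
Qed.

Lemma iter_linD (H : completeNormedModType CC) (D : set H) L k :
  lin_subspace D -> linD D L -> linD D (iter k L).
Proof.
move=> DS LD; elim: k => [|k [IH1 IH2]] //=.
split=> [x Dx|c x y Dx Dy]; first by rewrite iterS; exact: LD.1 (IH1 _ Dx).
by rewrite !iterS IH2 // LD.2 //; apply: IH1.
Qed.

Lemma lin_scaled (H : completeNormedModType CC) (D : set H) (S : set H) a (g : CC) :
  lin_subspace D -> lin_op S a -> (forall f, D f -> S f /\ D (a f)) ->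
  linD D (fun v => g *: a v).
Proof.
move=> DS [_ aL] Da; split=> [x Dx|c x y Dx Dy]; first by apply: subZ => //; exact: (Da x Dx).2.
by rewrite (aL c x y (Da _ Dx).1 (Da _ Dy).1) scalerDr !scalerA mulrC.
Qed.

Lemma lin_of (H : completeNormedModType CC) (D : set H) (S : set H) a :
  lin_subspace D -> lin_op S a -> (forall f, D f -> S f /\ D (a f)) ->
  linD D a.
Proof.
move=> DS [_ aL] Da; split=> [x Dx|c x y Dx Dy]; first exact: (Da x Dx).2.
exact: (aL c x y (Da _ Dx).1 (Da _ Dy).1).
Qed.

Lemma ab_formula (H : completeNormedModType CC) (D : set H) a b phi0 :
  lin_subspace D -> linD D a -> linD D b ->
  (forall f, D f -> a (b f) - b (a f) = f) -> D phi0 -> a phi0 = 0 ->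
  forall n, a (iter n.+1 b phi0) = n.+1%:R *: iter n b phi0.
Proof.
move=> DS aD bD comm Dp a0.
have Di : forall n, D (iter n b phi0) by move=> n; exact: (iter_linD n DS bD).1.
have comm' : forall f, D f -> a (b f) = f + b (a f).
  by move=> f Df; apply/eqP; rewrite -subr_eq; apply/eqP; apply: comm.
elim=> [|n IH].
  by rewrite /= comm' // a0 (L0 DS bD) addr0 scale1r.
rewrite iterS comm' ?Di // IH (LZ _ DS bD) ?Di // -iterS.
by rewrite [in RHS]mulrS scalerDl scale1r.
Qed.

Lemma a_zero (H : completeNormedModType CC) (D : set H) a b phi0 (g : CC) :
  lin_subspace D -> linD D a -> linD D b ->
  (forall f, D f -> a (b f) - b (a f) = f) -> D phi0 -> a phi0 = 0 ->
  forall n k, (n < k)%N -> iter k (fun v => g *: a v) (iter n b phi0) = 0.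
Proof.
move=> DS aD bD comm Dp a0.
have Di : forall n, D (iter n b phi0) by move=> n; exact: (iter_linD n DS bD).1.
have AD : linD D (fun v => g *: a v).
  split=> [x Dx|c x y Dx Dy]; first by apply: subZ => //; apply: aD.1.
  by rewrite aD.2 // scalerDr !scalerA mulrC.
elim=> [|n IH] [|k] // lt; rewrite iterSr /=.
  by rewrite a0 scaler0 (L0 DS (iter_linD k DS AD)).
rewrite (ab_formula DS aD bD comm Dp a0) scalerA (LZ _ DS (iter_linD k DS AD)) ?Di //.
by rewrite IH ?scaler0.
Qed.

Lemma part1 (H : completeNormedModType CC) (D : set H) Sa a b phi0 (g : CC) :
  lin_subspace D -> lin_op Sa a -> (forall f, D f -> Sa f /\ D (a f)) -> linD D b ->
  (forall f, D f -> a (b f) - b (a f) = f) -> D phi0 -> a phi0 = 0 ->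
  span_phi b phi0 `<=` exp_dom Sa a g.
Proof.
move=> DS aO Da bD comm Dp a0.
have aD := lin_of DS aO Da.
have AD := lin_scaled g DS aO Da.
have Di : forall n, D (iter n b phi0) by move=> n; exact: (iter_linD n DS bD).1.
have Dphi : forall n, D (phi_vec b phi0 n) by move=> n; apply: subZ.
move=> f [N [c ->]]; split.
  move=> k; apply: (Da _ _).1; apply: (iter_linD k DS AD).1; exact: (@subsum _ _ N c _ DS Dphi).
apply/cauchy_cvgP/cauchy_seriesP => e e0.
have uz : forall k, (N <= k)%N ->
    (k`!%:R : CC)^-1 *: iter k (fun v => g *: a v) (\sum_(n < N) c n *: phi_vec b phi0 n) = 0.
  move=> k Nk; rewrite (Lsum _ _ DS (iter_linD k DS AD) Dphi).
  rewrite big1 ?scaler0 // => i _.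
  rewrite /phi_vec (LZ _ DS (iter_linD k DS AD) (Di _)).
  by rewrite (a_zero g DS aD bD comm Dp a0) ?scaler0 //; apply: leq_trans Nk.
exists ([set m | (N <= m)%N], setT); first by split; [exists N|exact: filterT].
case=> m1 m2 [/= Nm1 _].
rewrite big_nat_cond big1 ?normr0 // => i /andP[/andP[m1i _] _].
by apply: uz; apply: leq_trans m1i.
Qed.

Lemma cmp_cvg (H : completeNormedModType CC) (u : nat -> H) (w : RR^nat) :
  (forall k, `|u k| <= (w k)%:C) -> cvgn (series w) -> cvgn (series u).
Proof.
move=> uw wcv.
have wc0 : cauchy (series w @ \oo) by apply: cvg_cauchy.
have wc := proj1 (@cauchy_seriesP RR RR^o w) wc0.
apply/cauchy_cvgP/cauchy_seriesP => e e0.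
case: e e0 => x y; rewrite ltcE /= => /andP[/eqP y0 x0]; subst y.
apply: filterS (wc _ x0) => p hp.
apply: le_lt_trans (ler_norm_sum _ _ _) _.
apply: le_lt_trans (ler_sum _ (fun k _ => uw k)) _.
rewrite -rmorph_sum complexr0 ltcR.
exact: le_lt_trans (ler_norm _) hp.
Qed.

Lemma ratio_cvg (w : RR^nat) K :
  (forall k, 0 <= w k) -> (forall k, (K <= k)%N -> w k.+1 <= w k / 2) ->
  cvgn (series w).
Proof.
move=> w0 wr.
pose C := \sum_(j < K.+1) w j * 2 ^+ j.
have C0 : 0 <= C by apply: sumr_ge0 => i _; rewrite mulr_ge0 ?exprn_ge0.
have inr : forall k, (k <= K)%N -> w k * 2 ^+ k <= C.
  move=> k kK; have kK' : (k < K.+1)%N by [].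
  rewrite /C (bigD1 (Ordinal kK')) //= lerDl.
  by apply: sumr_ge0 => i _; rewrite mulr_ge0 ?exprn_ge0.
have bnd : forall k, w k * 2 ^+ k <= C.
  elim=> [|k IH]; first exact: inr.
  case: (leqP k.+1 K) => [kK|Kk]; first exact: inr.
  apply: le_trans IH; rewrite exprS mulrA.
  have := wr k Kk; rewrite -(ler_pM2r (_ : 0 < 2)) // => h.
  apply: ler_wpM2r; first by rewrite exprn_ge0.
  by apply: le_trans h _; rewrite divfK.
apply: (@series_le_cvg _ _ (geometric C (2^-1))) => //.
- by move=> n; rewrite /= mulr_ge0 // exprn_ge0 // invr_ge0.
- move=> n; rewrite /= exprVn.
  by rewrite -(ler_pM2r (_ : 0 < 2 ^+ n)) ?exprn_gt0 // -mulrA mulVf ?mulr1.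
- apply: is_cvg_geometric_series.
  by rewrite ger0_norm ?invr_ge0 // invf_lt1 // ltr1n.
Qed.

Lemma ratio_bound (q b : RR) n : 0 <= q -> b < 1 ->
  exists K, forall k, (K <= k)%N ->
    q * powR ((k + n).+1%:R) b <= (k.+1)%:R / 2.
Proof.
move=> q0 b1.
pose E := 4 * q + 1.
have E0 : 0 < E by rewrite /E; lra.
pose X := powR E ((1 - b)^-1).
have X0 : 0 <= X by apply: powR_ge0.
exists (maxn n (Num.bound X)) => k; rewrite geq_max => /andP[nk Xk].
set x : RR := ((k + n).+1)%:R.
have x0 : 0 < x by rewrite /x ltr0n.
have xX : X <= x.
  apply: (le_trans (ltW (archi_boundP X0))).
  by rewrite /x ler_nat; lia.
have b1' : 0 < 1 - b by lra.
have hP : E <= powR x (1 - b).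
  have -> : E = powR X (1 - b).
    by rewrite /X -powRrM mulVf ?gt_eqF // powRr1 // ltW.
  apply: ge0_ler_powR => //; [exact: ltW | rewrite nnegrE; exact: ltW].
set P := powR x (1 - b) in hP.
have P0 : 0 < P by apply: lt_le_trans hP.
have hb : powR x b = x * P^-1.
  have -> : b = 1 - (1 - b) by ring.
  rewrite powRB ?powRr1 ?(ltW x0) //.
  by rewrite (gt_eqF x0) /= implybT.
rewrite hb.
set y := P^-1.
have y0 : 0 <= y by rewrite /y invr_ge0 ltW.
have hy : E * y <= 1.
  by rewrite -(mulfV (lt0r_neq0 P0)); apply: ler_wpM2r.
have x2 : x <= 2 * (k.+1)%:R.
  by rewrite /x -natrM ler_nat; lia.
rewrite /E in hy.
nra.
Qed.

Lemma sqrtC_nat (m : nat) : sqrtC (m%:R : CC) = (Num.sqrt (m%:R : RR))%:C.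
Proof.
have -> : (m%:R : CC) = ((Num.sqrt (m%:R : RR))%:C) ^+ 2.
  by rewrite -rmorphXn sqr_sqrtr ?ler0n // rmorph_nat.
by rewrite sqrCK // ler0c sqrtr_ge0.
Qed.

Lemma normC_real (g : CC) : exists2 gg : RR, 0 <= gg & `|g| = gg%:C.
Proof.
case: g => x y; exists (Num.sqrt (x ^+ 2 + y ^+ 2)); first exact: sqrtr_ge0.
by rewrite normc_def.
Qed.

Lemma w_ratio (gg r a : RR) n k :
  let w := fun k : nat => ((k`!%:R)^-1 * (Num.sqrt (n`!%:R))^-1 * gg ^+ k *
      Num.sqrt ((k + n)`!%:R)) * (r ^+ (k + n) * powR ((k + n)`!%:R) a) in
  w k.+1 = w k * ((k.+1%:R)^-1 * (gg * r * powR ((k + n).+1%:R) (2^-1 + a))).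
Proof.
move=> w; rewrite /w addSn !factS !natrM invfM sqrtrM ?ler0n // powRM ?ler0n //.
rewrite powRD; last by rewrite pnatr_eq0 implybT.
rewrite powR12_sqrt ?ler0n // !exprS.
ring.
Qed.

Lemma part2_single (H : completeNormedModType CC) (D : set H) b phi0 (g : CC)
    (r a : RR) n :
  lin_subspace D -> linD D b -> D phi0 -> 0 < r -> 0 <= a < 2^-1 ->
  (forall n, `|phi_vec b phi0 n| <= (r ^+ n * powR (n`!%:R) a)%:C) ->
  cvgn (series (fun k => (k`!%:R : CC)^-1 *:
        iter k (fun v => g *: b v) (phi_vec b phi0 n))).
Proof.
move=> DS bD Dp r0 /andP[a0 a1] phb.
have Di : forall n, D (iter n b phi0) by move=> m; exact: (iter_linD m DS bD).1.
have BD : linD D (fun v => g *: b v).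
  split=> [x Dx|c x y Dx Dy]; first by apply: subZ => //; apply: bD.1.
  by rewrite bD.2 // scalerDr !scalerA mulrC.
have itB : forall k, iter k (fun v => g *: b v) (iter n b phi0) =
    g ^+ k *: iter (k + n) b phi0.
  elim=> [|k IH]; first by rewrite scale1r.
  by rewrite iterS IH (LZ _ DS bD (Di _)) scalerA -exprS addSn iterS.
have ph : forall m, iter m b phi0 = sqrtC (m`!%:R) *: phi_vec b phi0 m.
  move=> m; rewrite /phi_vec scalerA mulfV ?scale1r //.
  by rewrite sqrtC_eq0 pnatr_eq0 -lt0n fact_gt0.
have [gg gg0 ggE] := normC_real g.
pose w := fun k : nat => ((k`!%:R)^-1 * (Num.sqrt (n`!%:R))^-1 * gg ^+ k *
      Num.sqrt ((k + n)`!%:R)) * (r ^+ (k + n) * powR ((k + n)`!%:R) a).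
apply: (@cmp_cvg _ _ w).
  move=> k.
  rewrite [phi_vec b phi0 n]/phi_vec (LZ _ DS (iter_linD k DS BD) (Di _)) itB ph.
  move: (phi_vec b phi0 (k + n)) (phb (k + n)) => v hv.
  rewrite !scalerA normrZ /w rmorphM /=.
  apply: le_trans (ler_wpM2l (normr_ge0 _) hv) _.
  rewrite le_eqVlt; apply/orP; left; apply/eqP; congr (_ * _).
  rewrite !normrM !normrV ?unitfE.
  rewrite normrX ggE normr_nat !sqrtC_nat !ger0_norm ?ler0c ?sqrtr_ge0 //.
  by rewrite !rmorphM /= !fmorphV /= rmorphXn /= rmorph_nat.
  by rewrite sqrtC_eq0 pnatr_eq0 -lt0n fact_gt0.
  by rewrite pnatr_eq0 -lt0n fact_gt0.
have b1 : 2^-1 + a < 1 by lra.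
have [K HK] := ratio_bound n (mulr_ge0 gg0 (ltW r0)) b1.
apply: (@ratio_cvg w K).
  move=> k; rewrite /w !mulr_ge0 ?invr_ge0 ?sqrtr_ge0 ?ler0n ?exprn_ge0 ?powR_ge0 //.
  exact: ltW.
move=> k Kk; rewrite /w w_ratio -/w.
have wk0 : 0 <= w k.
  rewrite /w !mulr_ge0 ?invr_ge0 ?sqrtr_ge0 ?ler0n ?exprn_ge0 ?powR_ge0 //.
  exact: ltW.
apply: ler_wpM2l => //.
apply: le_trans (ler_wpM2l _ (HK k Kk)) _; first by rewrite invr_ge0 ler0n.
by rewrite mulrA mulVf ?pnatr_eq0 // mul1r.
Qed.

Lemma cvg_series_sum (H : completeNormedModType CC) N (c : nat -> CC)
    (u : nat -> nat -> H) :
  (forall i, cvgn (series (u i))) ->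
  cvgn (series (fun k => \sum_(i < N) c i *: u i k)).
Proof.
move=> hu; elim: N => [|N IH].
  have -> : series (fun k => \sum_(i < 0) c i *: u i k) = fun=> (0 : H).
    apply/funext => n; rewrite /series /=.
    by rewrite big1 // => i _; rewrite big_ord0.
  exact: is_cvg_cst.
have -> : (fun k => \sum_(i < N.+1) c i *: u i k) =
    (fun k => \sum_(i < N) c i *: u i k) + c N *: u N.
  by apply/funext => k; rewrite big_ord_recr.
rewrite seriesD seriesZ; apply: is_cvgD => //.
exact: is_cvgZl_tmp.
Qed.

Lemma part2 (H : completeNormedModType CC) (D : set H) Sb b phi0 (g : CC) (r a : RR) :
  lin_subspace D -> lin_op Sb b -> (forall f, D f -> Sb f /\ D (b f)) ->
  D phi0 -> 0 < r -> 0 <= a < 2^-1 ->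
  (forall n, `|phi_vec b phi0 n| <= (r ^+ n * powR (n`!%:R) a)%:C) ->
  span_phi b phi0 `<=` exp_dom Sb b g.
Proof.
move=> DS bO Db Dp r0 ha phb.
have bD := lin_of DS bO Db.
have BD := lin_scaled g DS bO Db.
have Di : forall n, D (iter n b phi0) by move=> n; exact: (iter_linD n DS bD).1.
have Dphi : forall n, D (phi_vec b phi0 n) by move=> n; apply: subZ.
move=> f [N [c ->]]; split.
  move=> k; apply: (Db _ _).1; apply: (iter_linD k DS BD).1.
  exact: (@subsum _ _ N c _ DS Dphi).
have -> : (fun k => (k`!%:R : CC)^-1 *: iter k (fun v => g *: b v)
                       (\sum_(n < N) c n *: phi_vec b phi0 n)) =
   (fun k => \sum_(i < N) c i *: ((k`!%:R : CC)^-1 *: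
        iter k (fun v => g *: b v) (phi_vec b phi0 i))).
  apply/funext => k; rewrite (Lsum _ _ DS (iter_linD k DS BD) Dphi).
  by rewrite scaler_sumr; apply: eq_bigr => i _; rewrite !scalerA mulrC.
apply: (@cvg_series_sum _ N c (fun i k => (k`!%:R : CC)^-1 *: iter k (fun v => g *: b v) (phi_vec b phi0 i))) => i.
refine (part2_single DS bD Dp r0 ha phb).
Qed.

Unset Implicit Arguments.
Set Strict Implicit.

Theorem mainTheorem1
  (H : completeNormedModType CC) (ip : H -> H -> CC)
  (Sa : set H) (a : H -> H) (Sb : set H) (b : H -> H)
  (Sad : set H) (ad : H -> H) (Sbd : set H) (bd : H -> H)
  (D : set H) (phi0 : H) (gamma : CC) :
  is_inner_product ip ->
  lin_subspace D -> closure D = setT ->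
  lin_op Sa a -> lin_op Sb b ->
  is_adjoint ip Sa a Sad ad -> is_adjoint ip Sb b Sbd bd ->
  (forall f, D f -> Sa f /\ D (a f)) ->
  (forall f, D f -> Sad f /\ D (ad f)) ->
  (forall f, D f -> Sb f /\ D (b f)) ->
  (forall f, D f -> Sbd f /\ D (bd f)) ->
  (forall f, D f -> a (b f) - b (a f) = f) ->
  phi0 != 0 -> D phi0 -> a phi0 = 0 ->
  (span_phi b phi0 `<=` exp_dom Sa a gamma) /\
  ((exists (r alpha : RR), 0 < r /\ 0 <= alpha < 2^-1 /\
      forall n : nat,
        `|phi_vec b phi0 n| <= (r ^+ n * powR (n`!%:R) alpha)%:C) ->
   span_phi b phi0 `<=` exp_dom Sb b gamma).
Proof.
move=> _ DS _ aO bO _ _ Da _ Db _ comm _ Dp a0; split.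
  exact: (part1 gamma DS aO Da (lin_of DS bO Db) comm Dp a0).
move=> [r [al [r0 [ha phb]]]].
exact: (part2 gamma DS bO Db Dp r0 ha phb).
Qed.
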